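(* Let $k\ge3$, $F$ a field, $\Phi\le F^*$ of order $k$ with generator $\varphi$, $(F,\Phi)$ circular. Let $\mathcal{G}=\mathcal{G}_0$ if $k$ is even and $\mathcal{G}=\mathcal{G}_1$ if $k$ is odd. Then every $\mathcal{G}$-orbit in $\mathcal{O}_\varphi(F,k)$ contains a reduced element.
   Context: $\mathbf{k}=\{1,\dots,k-1\}$, $\mathbf{k}_0=\{0,\dots,k-1\}$. $(F,\Phi)$ is circular if $|(\Phi a+b)\cap\Phi c|\le2$ for all $a,b,c\in F^*$, with $\Phi a+b=\{\lambda a+b:\lambda\in\Phi\}$. A quadruple $(i,j\mid s,t)\in\mathbf{k}^4$ with $i\ne s$ is an overlap (w.r.t. $\varphi$) if $\varphi^\omega(\varphi^j-1)(\varphi^s-1)=(\varphi^i-1)(\varphi^t-1)$ for some $\omega\in\mathbf{k}_0$; it is trivial if one of $i\equiv\pm j$, $j\equiv\pm t$, $t\equiv\pm s$, $s\equiv\pm i\pmod k$ holds, nontrivial otherwise; $\mathcal{O}_\varphi(F,k)$ is the set of nontrivial overlaps. For $m=1,\dots,4$, $\kappa_m$ replaces the $m$-th entry $u$ of a quadruple by $k-u$. $D_4$ is the group of coordinate permutations of $(i,j\mid s,t)$ generated by $(i,t)$, $(j,s)$, $(i,j)(s,t)$. $\mathcal{G}_0=\langle\kappa_1,\dots,\kappa_4,D_4\rangle$ and $\mathcal{G}_1=\langle\kappa_1\kappa_4,\kappa_2\kappa_4,\kappa_3\kappa_4,D_4\rangle$. An element $(i,j\mid s,t)$ is reduced if $i<j\le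 s$, $j\le k/2$, and at most one of $i,j,s,t$ exceeds $k/2$. *)

(* Defs.v *)
From HB Require Import structures.
From mathcomp Require Import all_boot all_order all_algebra.
From Stdlib Require List.
Set Implicit Arguments. Unset Strict Implicit. Unset Printing Implicit Defensive.
Import Order.TTheory GRing.Theory Num.Theory.

Record quad := Quad { qi : nat; qj : nat; qs : nat; qt : nat }.

Section Defs.
Variable F : fieldType.
Local Open Scope ring_scope.

Definition Phi_seq (phi : F) (k : nat) : seq F := [seq phi ^+ n | n <- iota 0 k].

Definition circular (Phi : seq F) : Prop :=
  forall a b c : F, a != 0 -> b != 0 -> c != 0 ->
    (size (undup [seq x <- [seq (l * a + b)%R | l <- Phi] | x \in [seq (l * c)%R | l <- Phi]])
       <= 2)%N.

Definition in_k (k u : nat) : bool := (0 < u < k)%N.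

Definition in_k4 (k : nat) (q : quad) : bool :=
  [&& in_k k (qi q), in_k k (qj q), in_k k (qs q) & in_k k (qt q)].

Definition overlap (phi : F) (k : nat) (q : quad) : Prop :=
  in_k4 k q /\ qi q <> qs q /\
  exists w : nat, (w < k)%N /\
    phi ^+ w * (phi ^+ qj q - 1) * (phi ^+ qs q - 1)
    = (phi ^+ qi q - 1) * (phi ^+ qt q - 1).

Definition congpm (k a b : nat) : bool :=
  (a == b %[mod k]) || (a + b == 0 %[mod k]).

Definition trivial_quad (k : nat) (q : quad) : bool :=
  [|| congpm k (qi q) (qj q), congpm k (qj q) (qt q),
      congpm k (qt q) (qs q) | congpm k (qs q) (qi q)].

Definition nontriv_overlap (phi : F) (k : nat) (q : quad) : Prop :=
  overlap phi k q /\ ~~ trivial_quad k q.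

End Defs.

Definition kappa1 (k : nat) (q : quad) := Quad (k - qi q) (qj q) (qs q) (qt q).
Definition kappa2 (k : nat) (q : quad) := Quad (qi q) (k - qj q) (qs q) (qt q).
Definition kappa3 (k : nat) (q : quad) := Quad (qi q) (qj q) (k - qs q) (qt q).
Definition kappa4 (k : nat) (q : quad) := Quad (qi q) (qj q) (qs q) (k - qt q).

Definition swap_it (q : quad) := Quad (qt q) (qj q) (qs q) (qi q).
Definition swap_js (q : quad) := Quad (qi q) (qs q) (qj q) (qt q).
Definition swap_ij_st (q : quad) := Quad (qj q) (qi q) (qt q) (qs q).

Definition D4_gens : list (quad -> quad) := swap_it :: swap_js :: swap_ij_st :: nil.

Definition G0_gens (k : nat) : list (quad -> quad) :=
  kappa1 k :: kappa2 k :: kappa3 k :: kappa4 k :: D4_gens.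

Definition G1_gens (k : nat) : list (quad -> quad) :=
  (fun q => kappa1 k (kappa4 k q)) :: (fun q => kappa2 k (kappa4 k q)) ::
  (fun q => kappa3 k (kappa4 k q)) :: D4_gens.

Definition G_gens (k : nat) : list (quad -> quad) :=
  if odd k then G1_gens k else G0_gens k.

(* All the
   generators are involutions on the quadruples considered, so the orbit under
   the generated group coincides with the closure under the generators. *)
Inductive quad_orbit (gens : list (quad -> quad)) (q : quad) : quad -> Prop :=
  | orbit_refl : quad_orbit gens q q
  | orbit_step : forall (r : quad) (g : quad -> quad),
      quad_orbit gens q r -> List.In g gens -> quad_orbit gens q (g r).

Definition reduced (k : nat) (q : quad) : bool :=
  [&& (qi q < qj q <= qs q)%N, (qj q).*2 <= k &
      (count (fun u => k < u.*2) [:: qi q; qj q; qs q; qt q] <= 1)%N].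
Arguments quad_orbit gens q _ : clear implicits.

(* Main.v *)
Require Import Defs.
From mathcomp Require Import all_boot all_order all_algebra.
From mathcomp Require Import zify.
Local Open Scope ring_scope.

Definition fold (k x : nat) : nat := if (k < x.*2)%N then (k - x)%N else x.

Lemma orbit_trans gens q r s :
  quad_orbit gens q r -> quad_orbit gens r s -> quad_orbit gens q s.
Proof. move=> H1 H2; elim: H2 => // r' g _ IH Hg; exact: orbit_step. Qed.

Lemma orbit1 gens q g : List.In g gens -> quad_orbit gens q (g q).
Proof. move=> Hg; apply: orbit_step => //; exact: orbit_refl. Qed.

Lemma orbit_if gens q r g (b : bool) : quad_orbit gens q r -> List.In g gens ->
  quad_orbit gens q (if b then g r else r).
Proof. by case: b => // H Hg; apply: orbit_step. Qed.

Lemma fold_le k x : (x <= k)%N -> ((fold k x).*2 <= k)%N.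
Proof. rewrite /fold; case: ifP; rewrite -!muln2 => H1 H2; lia. Qed.

Lemma fold_pos k x : (0 < x < k)%N -> (0 < fold k x)%N.
Proof. rewrite /fold; case: ifP; rewrite -!muln2 => H1 /andP[H2 H3]; lia. Qed.

Lemma fold_eq k a b : (0 < a < k)%N -> (0 < b < k)%N -> fold k a = fold k b ->
  congpm k a b.
Proof.
move=> Ha Hb Hf.
have : a = b \/ (a + b = k)%N.
  move: Hf Ha Hb; rewrite /fold; case: ifP; case: ifP; rewrite -!muln2;
  move=> H1 H2 H3 /andP[H4 H5] /andP[H6 H7]; lia.
rewrite /congpm; case=> [->|<-]; first by rewrite eqxx.
by rewrite modnn mod0n eqxx orbT.
Qed.

Lemma D4_in gens : List.In swap_it gens -> List.In swap_js gens ->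
  List.In swap_ij_st gens -> forall k (q : quad), in_k4 k q -> ~~ trivial_quad k q ->
  exists r, quad_orbit gens q r /\ in_k4 k r /\
    (fold k (qi r) < fold k (qj r) <= fold k (qs r))%N.
Proof.
move=> H1 H2 H3 k [i j s t] /=; rewrite /in_k4 /in_k /trivial_quad /=.
move=> /and4P[Hi Hj Hs Ht].
move=> Hn.
have Nij : ~~ congpm k i j by move: Hn; case: (congpm k i j).
have Njt : ~~ congpm k j t by move: Hn; case: (congpm k j t); rewrite ?orbT.
have Nts : ~~ congpm k t s by move: Hn; case: (congpm k t s); rewrite ?orbT.
have Nsi : ~~ congpm k s i by move: Hn; case: (congpm k s i); rewrite ?orbT.
have Dij : fold k i <> fold k j by move/(@fold_eq k i j Hi Hj); apply/negP.
have Djt : fold k j <> fold k t by move/(@fold_eq k j t Hj Ht); apply/negP.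
have Dts : fold k t <> fold k s by move/(@fold_eq k t s Ht Hs); apply/negP.
have Dsi : fold k s <> fold k i by move/(@fold_eq k s i Hs Hi); apply/negP.
set fi := fold k i in Dij Dsi *; set fj := fold k j in Dij Djt *;
set fs := fold k s in Dts Dsi *; set ft := fold k t in Djt Dts *.
have ord : forall r, quad_orbit gens (Quad i j s t) r -> in_k4 k r ->
   (fold k (qi r) < fold k (qj r))%N -> (fold k (qi r) < fold k (qs r))%N ->
   exists r0, quad_orbit gens (Quad i j s t) r0 /\ in_k4 k r0 /\
    (fold k (qi r0) < fold k (qj r0) <= fold k (qs r0))%N.
  move=> r Hr Hk A B.
  case: (leqP (fold k (qj r)) (fold k (qs r))) => C.
    by exists r; rewrite A C.
  exists (swap_js r); split; first exact: orbit_step.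
  move: Hk; rewrite /in_k4 /= => /and4P[-> -> -> ->] /=.
  by rewrite B ltnW.
have Hq : in_k4 k (Quad i j s t) by rewrite /in_k4 /in_k /= Hi Hj Hs Ht.
case: (leqP fi fj) => a1; case: (leqP fi fs) => a2; case: (leqP fi ft) => a3;
case: (leqP fj fs) => a4; case: (leqP fj ft) => a5; case: (leqP fs ft) => a6;
  try lia.
all: first
  [ (apply: (ord (Quad i j s t)); [exact: orbit_refl|exact: Hq|rewrite /=; lia|rewrite /=; lia])
  | (apply: (ord (swap_it (Quad i j s t))); [exact: orbit1|by rewrite /in_k4 /in_k /= Hi Hj Hs Ht|rewrite /=; lia|rewrite /=; lia])
  | (apply: (ord (swap_ij_st (Quad i j s t))); [exact: orbit1|by rewrite /in_k4 /in_k /= Hi Hj Hs Ht|rewrite /=; lia|rewrite /=; lia])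
  | (apply: (ord (swap_ij_st (swap_js (Quad i j s t)))); [apply: orbit_step => //; exact: orbit1|by rewrite /in_k4 /in_k /= Hi Hj Hs Ht|rewrite /=; lia|rewrite /=; lia]) ].
Qed.

Lemma flip k r : exists r', quad_orbit (G_gens k) r r' /\
  qi r' = fold k (qi r) /\ qj r' = fold k (qj r) /\ qs r' = fold k (qs r).
Proof.
case: r => i j s t /=; rewrite /fold.
rewrite /G_gens; case: (odd k).
- set g1 := (fun q => kappa1 k (kappa4 k q)).
  set g2 := (fun q => kappa2 k (kappa4 k q)).
  set g3 := (fun q => kappa3 k (kappa4 k q)).
  have I1 : List.In g1 (G1_gens k) by rewrite /G1_gens /=; tauto.
  have I2 : List.In g2 (G1_gens k) by rewrite /G1_gens /=; tauto.
  have I3 : List.In g3 (G1_gens k) by rewrite /G1_gens /=; tauto.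
  exists (let q := Quad i j s t in
          let q1 := if (k < i.*2)%N then g1 q else q in
          let q2 := if (k < j.*2)%N then g2 q1 else q1 in
          if (k < s.*2)%N then g3 q2 else q2); split.
    by apply: orbit_if => //; apply: orbit_if => //; apply: orbit_if => //; apply: orbit_refl.
  by case: (k < i.*2)%N; case: (k < j.*2)%N; case: (k < s.*2)%N.
- have I1 : List.In (kappa1 k) (G0_gens k) by rewrite /G0_gens /=; tauto.
  have I2 : List.In (kappa2 k) (G0_gens k) by rewrite /G0_gens /=; tauto.
  have I3 : List.In (kappa3 k) (G0_gens k) by rewrite /G0_gens /=; tauto.
  exists (let q := Quad i j s t in
          let q1 := if (k < i.*2)%N then kappa1 k q else q in
          let q2 := if (k < j.*2)%N then kappa2 k q1 else q1 in
          if (k < s.*2)%N then kappa3 k q2 else q2); split.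
    by apply: orbit_if => //; apply: orbit_if => //; apply: orbit_if => //; apply: orbit_refl.
  by case: (k < i.*2)%N; case: (k < j.*2)%N; case: (k < s.*2)%N.
Qed.

Theorem lemma17 (F : fieldType) (k : nat) (phi : F) :
  (3 <= k)%N ->
  k.-primitive_root phi ->
  circular (Phi_seq phi k) ->
  forall q : quad, nontriv_overlap phi k q ->
    exists r : quad, quad_orbit (G_gens k) q r /\ reduced k r.
Proof.
move=> _ _ _ q [[Hk _] Hnt].
have HD : List.In swap_it (G_gens k) /\ List.In swap_js (G_gens k) /\
          List.In swap_ij_st (G_gens k).
  by rewrite /G_gens /G1_gens /G0_gens /D4_gens; case: (odd k) => /=; tauto.
case: HD => D1 [D2 D3].
have [r [Hr [Hrk Hlt]]] := @D4_in _ D1 D2 D3 k q Hk Hnt.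
have [r' [Hr' [E1 [E2 E3]]]] := flip k r.
exists r'; split; first exact: orbit_trans Hr Hr'.
move: Hrk; rewrite /in_k4 /in_k => /and4P[/andP[_ Li] /andP[_ Lj] /andP[_ Ls] _].
have Fi := @fold_le k _ (ltnW Li); have Fj := @fold_le k _ (ltnW Lj);
have Fs := @fold_le k _ (ltnW Ls).
rewrite /reduced E1 E2 E3 Hlt Fj /=.
rewrite !ltnNge Fi Fj Fs /=.
by case: ((qt r').*2 <= k)%N.
Qed.
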